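(* For every tournament $R$ on $[n]=\{1,\dots,n\}$ there exist distinct $f_1,\dots,f_n\in\mathcal G_0$ such that for all distinct $i,j\in[n]$, $$\int_{-1}^1 f_j(f_i^{-1}(t))\,dt>0 \iff (i,j)\in R .$$ That is, every finite tournament embeds into the restriction of the digraph $\Gamma_{\mathcal G}$ to $\mathcal G_0$.
   Context: A tournament on a set $I$ is a subset $R\subset I\times I$ containing no pair $(i,i)$ such that for every pair of distinct $i,j\in I$ exactly one of $(i,j),(j,i)$ lies in $R$. Let $\mathcal G$ be the group (under composition) of strictly increasing continuous maps $f:[-1,1]\to[-1,1]$ with $f(-1)=-1$, $f(1)=1$, and $\mathcal G_0=\{f\in\mathcal G:\int_{-1}^1 f(t)\,dt=0\}$. The digraph $\Gamma_{\mathcal G}$ on $\mathcal G$ has an edge $f\to g$ iff $\int_{-1}^1 g(f^{-1}(t))\,dt>0$. *)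

(* Defs.v *)
From Stdlib Require Import Reals Lra ClassicalEpsilon.
From Coquelicot Require Import Coquelicot.
Open Scope R_scope.

Definition in_range (n i : nat) : Prop := (1 <= i <= n)%nat.

Definition is_tournament (n : nat) (T : nat -> nat -> Prop) : Prop :=
  (forall i j, T i j -> in_range n i /\ in_range n j) /\
  (forall i, ~ T i i) /\
  (forall i j, in_range n i -> in_range n j -> i <> j ->
     (T i j \/ T j i) /\ ~ (T i j /\ T j i)).

Definition cont_on_I (f : R -> R) : Prop :=
  forall x, -1 <= x <= 1 -> forall eps, 0 < eps -> exists delta, 0 < delta /\
    forall y, -1 <= y <= 1 -> Rabs (y - x) < delta -> Rabs (f y - f x) < eps.

(* Membership in the group G: strictly increasing continuous self-map of
   [-1,1] fixing -1 and 1 (only the values on [-1,1] matter). *)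
Definition inG (f : R -> R) : Prop :=
  (forall x y, -1 <= x -> x < y -> y <= 1 -> f x < f y) /\
  cont_on_I f /\ f (-1) = -1 /\ f 1 = 1.

Definition inG0 (f : R -> R) : Prop := inG f /\ RInt f (-1) 1 = 0.

Definition ginv (f : R -> R) (t : R) : R :=
  epsilon (inhabits 0) (fun x => -1 <= x <= 1 /\ f x = t).

Definition G_eq (f g : R -> R) : Prop := forall x, -1 <= x <= 1 -> f x = g x.

(* Main.v *)
Require Import Defs.
From Stdlib Require Import Reals.
From Coquelicot Require Import Coquelicot.
From Stdlib Require Import Lra Lia ClassicalEpsilon.
Open Scope R_scope.

Lemma iR_plus (f g : R -> R) a b If Ig : is_RInt f a b If -> is_RInt g a b Ig ->
  is_RInt (fun x => f x + g x) a b (If + Ig).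
Proof. intros H1 H2. exact (is_RInt_plus f g a b If Ig H1 H2). Qed.
Lemma iR_minus (f g : R -> R) a b If Ig : is_RInt f a b If -> is_RInt g a b Ig ->
  is_RInt (fun x => f x - g x) a b (If - Ig).
Proof. intros H1 H2. exact (is_RInt_minus f g a b If Ig H1 H2). Qed.
Lemma iR_scal (f : R -> R) a b k If : is_RInt f a b If -> is_RInt (fun x => k * f x) a b (k * If).
Proof. intros H. exact (is_RInt_scal f a b k If H). Qed.
Lemma iR_ext (f g : R -> R) a b (l : R) : (forall x, f x = g x) -> is_RInt f a b l -> is_RInt g a b l.
Proof. intros H1 H2. apply (is_RInt_ext f); auto. Qed.
Lemma iR_val (f : R -> R) a b (l l' : R) : is_RInt f a b l -> l = l' -> is_RInt f a b l'.
Proof. intros H <-; auto. Qed.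
Lemma iR_const a b (v : R) : is_RInt (fun _ => v) a b ((b - a) * v).
Proof. exact (is_RInt_const a b v). Qed.

Lemma iR_sum (g : nat -> R -> R) (I : nat -> R) N a b :
  (forall k, (k <= N)%nat -> is_RInt (g k) a b (I k)) ->
  is_RInt (fun x => sum_f_R0 (fun k => g k x) N) a b (sum_f_R0 I N).
Proof.
  induction N; intros H; simpl.
  - apply H; lia.
  - apply (iR_plus (fun x => sum_f_R0 (fun k => g k x) N) (g (S N))).
    + apply IHN; intros; apply H; lia.
    + apply H; lia.
Qed.

Lemma der_plus (f g : R -> R) x df dg : is_derive f x df -> is_derive g x dg ->
  is_derive (fun x => f x + g x) x (df + dg).
Proof. intros; apply (is_derive_plus f g); auto. Qed.
Lemma der_minus (f g : R -> R) x df dg : is_derive f x df -> is_derive g x dg ->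
  is_derive (fun x => f x - g x) x (df - dg).
Proof. intros; apply (is_derive_minus f g); auto. Qed.
Lemma der_eq (f : R -> R) x (d d' : R) : is_derive f x d -> d = d' -> is_derive f x d'.
Proof. intros H <-; auto. Qed.
Lemma der_csin a c x : is_derive (fun x => a * sin (c * x)) x (a * c * cos (c * x)).
Proof. auto_derive; auto; ring. Qed.
Lemma der_ccos a c x : is_derive (fun x => a * cos (c * x)) x (- (a * c) * sin (c * x)).
Proof. auto_derive; auto; ring. Qed.
Lemma der_sum (g dg : nat -> R -> R) N x :
  (forall k, is_derive (g k) x (dg k x)) ->
  is_derive (fun x => sum_f_R0 (fun k => g k x) N) x (sum_f_R0 (fun k => dg k x) N).
Proof.
  intros H; induction N; simpl.
  - apply H.
  - apply (der_plus (fun x => sum_f_R0 (fun k => g k x) N) (g (S N))); auto.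
Qed.

Lemma sum_bound (f : nat -> R) B N : (forall k, Rabs (f k) <= B) ->
  Rabs (sum_f_R0 f N) <= INR (S N) * B.
Proof.
  intros H; induction N; simpl sum_f_R0.
  - simpl; specialize (H 0%nat); lra.
  - rewrite S_INR. eapply Rle_trans; [apply Rabs_triang|].
    specialize (H (S N)); lra.
Qed.

Lemma sum_zero (f : nat -> R) N : (forall k, (k <= N)%nat -> f k = 0) -> sum_f_R0 f N = 0.
Proof.
  induction N; intros H; simpl.
  - apply H; lia.
  - rewrite IHN; [rewrite H; [ring|lia]|intros; apply H; lia].
Qed.

Definition kd (a b : nat) : R := if Nat.eq_dec a b then 1 else 0.

Lemma sum_delta (f : nat -> R) N j : (j <= N)%nat ->
  sum_f_R0 (fun k => f k * kd k j) N = f j.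
Proof.
  induction N; intros H; simpl.
  - assert (j = 0%nat) by lia; subst; unfold kd; simpl; ring.
  - destruct (Nat.eq_dec j (S N)).
    + subst. rewrite sum_zero. unfold kd. destruct (Nat.eq_dec (S N) (S N)); [ring|congruence].
      intros k Hk; unfold kd; destruct (Nat.eq_dec k (S N)); [lia|ring].
    + rewrite IHN by lia. unfold kd; destruct (Nat.eq_dec (S N) j); [lia|ring].
Qed.

Lemma ftc (f df : R -> R) a b v : (forall x, is_derive f x (df x)) -> (forall x, continuous df x) ->
  f b - f a = v -> is_RInt df a b v.
Proof.
  intros H1 H2 H3. apply (iR_val _ _ _ (minus (f b) (f a))).
  apply (is_RInt_derive (V := R_CompleteNormedModule)); auto. rewrite <- H3; reflexivity.
Qed.

Lemma cont_of_der (f : R -> R) (x : R) : ex_derive f x -> continuous f x.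
Proof. intro H. apply (ex_derive_continuous (K := R_AbsRing) (V := R_NormedModule)); auto. Qed.
Lemma der_ext (f g : R -> R) x (l : R) : (forall t, f t = g t) -> is_derive f x l -> is_derive g x l.
Proof. intros H1 H2. apply (is_derive_ext f g x l); auto. Qed.
Lemma der_mult (f g : R -> R) x (df dg : R) : is_derive f x df -> is_derive g x dg ->
  is_derive (fun x => f x * g x) x (df * g x + f x * dg).
Proof. intros H1 H2. apply (is_derive_mult f g x df dg H1 H2). intros; apply Rmult_comm. Qed.
Lemma der_id x : is_derive (fun x : R => x) x 1.
Proof. apply (is_derive_id (K := R_AbsRing)). Qed.
Definition w := 2 * PI.
Lemma w_pos : 0 < w. Proof. unfold w; pose proof PI_RGT_0; lra. Qed.

Lemma cont_sin c x : continuous (fun x => sin (c * x)) x.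
Proof. apply cont_of_der. auto_derive; auto. Qed.
Lemma cont_cos c x : continuous (fun x => cos (c * x)) x.
Proof. apply cont_of_der. auto_derive; auto. Qed.

Lemma Lsin c : is_RInt (fun x => sin (c*x)) (-1) 1 0.
Proof.
  destruct (Req_dec c 0) as [->|Hc].
  - apply (iR_ext (fun _ => 0)). intros; rewrite Rmult_0_l, sin_0; auto.
    apply (iR_val _ _ _ _ _ (iR_const _ _ 0)). ring.
  - apply (ftc (fun x => - cos (c*x) / c)).
    + intros x. auto_derive; auto. field; auto.
    + intros; apply cont_sin.
    + replace (c * -1) with (- (c*1)) by ring. rewrite cos_neg. field; auto.
Qed.

Lemma Lcos c : c <> 0 -> sin c = 0 -> is_RInt (fun x => cos (c*x)) (-1) 1 0.
Proof.
  intros Hc Hs.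
  apply (ftc (fun x => sin (c*x) / c)).
  + intros x. auto_derive; auto. field; auto.
  + intros; apply cont_cos.
  + replace (c * -1) with (- (c*1)) by ring. rewrite sin_neg, Rmult_1_r, Hs. field; auto.
Qed.

Lemma Lcos0 : is_RInt (fun x => cos (0*x)) (-1) 1 2.
Proof.
  apply (iR_ext (fun _ => 1)). intros; rewrite Rmult_0_l, cos_0; auto.
  apply (iR_val _ _ _ _ _ (iR_const _ _ 1)). ring.
Qed.

Lemma sin_zw (z : Z) : sin (IZR z * w) = 0.
Proof. apply sin_eq_0_1. exists (2 * z)%Z. rewrite mult_IZR. unfold w. simpl. ring. Qed.

Lemma Ldiff a b : is_RInt (fun x => cos ((INR a - INR b) * w * x)) (-1) 1 (2 * kd a b).
Proof.
  unfold kd; destruct (Nat.eq_dec a b) as [<-|Hab].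
  - apply (iR_ext (fun x => cos (0 * x))). intros; f_equal; ring.
    apply (iR_val _ _ _ _ _ Lcos0). ring.
  - apply (iR_val _ _ _ 0). apply Lcos.
    + intro H. apply Rmult_integral in H. destruct H as [H|H].
      * apply Hab. apply INR_eq. lra.
      * pose proof w_pos; lra.
    + rewrite !INR_IZR_INZ, <- minus_IZR. apply sin_zw.
    + ring.
Qed.

Lemma Lsum a b : (1 <= a + b)%nat -> is_RInt (fun x => cos ((INR a + INR b) * w * x)) (-1) 1 0.
Proof.
  intros H. apply Lcos.
  + rewrite <- plus_INR. intro H'. apply Rmult_integral in H'. destruct H' as [H'|H'].
    * apply (le_INR 1) in H. simpl in H. lra.
    * pose proof w_pos; lra.
  + rewrite !INR_IZR_INZ, <- plus_IZR. apply sin_zw.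
Qed.

Lemma O1 a b : is_RInt (fun x => sin (INR a * w * x) * cos (INR b * w * x)) (-1) 1 0.
Proof.
  apply (iR_ext (fun x => /2 * sin ((INR a + INR b) * w * x) + /2 * sin ((INR a - INR b) * w * x))).
  - intros x. replace ((INR a + INR b) * w * x) with (INR a * w * x + INR b * w * x) by ring.
    replace ((INR a - INR b) * w * x) with (INR a * w * x - INR b * w * x) by ring.
    rewrite sin_plus, sin_minus. field.
  - apply (iR_val _ _ _ (/2 * 0 + /2 * 0)); [|ring].
    apply iR_plus; apply iR_scal; apply Lsin.
Qed.

Lemma O2 a b : (1 <= b)%nat ->
  is_RInt (fun x => cos (INR a * w * x) * cos (INR b * w * x)) (-1) 1 (kd a b).
Proof.
  intros Hb.
  apply (iR_ext (fun x => /2 * cos ((INR a - INR b) * w * x) + /2 * cos ((INR a + INR b) * w * x))).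
  - intros x. replace ((INR a + INR b) * w * x) with (INR a * w * x + INR b * w * x) by ring.
    replace ((INR a - INR b) * w * x) with (INR a * w * x - INR b * w * x) by ring.
    rewrite cos_plus, cos_minus. field.
  - apply (iR_val _ _ _ (/2 * (2 * kd a b) + /2 * 0)); [|field].
    apply iR_plus; apply iR_scal; [apply Ldiff | apply Lsum; lia].
Qed.

Lemma O3 a b : (1 <= b)%nat ->
  is_RInt (fun x => sin (INR a * w * x) * sin (INR b * w * x)) (-1) 1 (kd a b).
Proof.
  intros Hb.
  apply (iR_ext (fun x => /2 * cos ((INR a - INR b) * w * x) - /2 * cos ((INR a + INR b) * w * x))).
  - intros x. replace ((INR a + INR b) * w * x) with (INR a * w * x + INR b * w * x) by ring.
    replace ((INR a - INR b) * w * x) with (INR a * w * x - INR b * w * x) by ring.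
    rewrite cos_plus, cos_minus. field.
  - apply (iR_val _ _ _ (/2 * (2 * kd a b) - /2 * 0)); [|field].
    apply iR_minus; apply iR_scal; [apply Ldiff | apply Lsum; lia].
Qed.

Lemma L0 b : (1 <= b)%nat -> is_RInt (fun x => cos (INR b * w * x)) (-1) 1 0.
Proof.
  intros Hb. apply (iR_ext (fun x => cos ((INR b + INR 0) * w * x))).
  intros; simpl; f_equal; ring. apply Lsum; lia.
Qed.
Definition sg (T : nat -> nat -> Prop) i k : R :=
  if excluded_middle_informative (T i k) then 1 else -1.
Definition yc T i k := sg T i k / (2 * (INR k * w)).
Definition Ep n i x := cos (INR i * w * x) - cos (INR (S n) * w * x).
Definition Op n T i x := sum_f_R0 (fun k => yc T i k * sin (INR k * w * x)) n.
Definition phi n T i x := Ep n i x + Op n T i x.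
Definition Ap n i x := - (INR i * w) * sin (INR i * w * x) + (INR (S n) * w) * sin (INR (S n) * w * x).
Definition Sp n T i x := sum_f_R0 (fun k => yc T i k * (INR k * w) * cos (INR k * w * x)) n.
Definition dphi n T i x := Ap n i x + Sp n T i x.

Lemma phi_der n T i x : is_derive (phi n T i) x (dphi n T i x).
Proof.
  unfold phi, dphi, Ep, Op, Ap, Sp.
  apply der_plus.
  - apply (der_eq _ _ (- (1 * (INR i * w)) * sin (INR i * w * x) - - (1 * (INR (S n) * w)) * sin (INR (S n) * w * x))); [|ring].
    apply (der_minus (fun x => cos (INR i * w * x)) (fun x => cos (INR (S n) * w * x))).
    + apply (der_ext (fun x => 1 * cos (INR i * w * x))); [intros; ring|].
      apply (der_ccos 1 (INR i * w)).
    + apply (der_ext (fun x => 1 * cos (INR (S n) * w * x))); [intros; ring|].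
      apply (der_ccos 1 (INR (S n) * w)).
  - apply (der_sum (fun k x => yc T i k * sin (INR k * w * x)) (fun k x => yc T i k * (INR k * w) * cos (INR k * w * x))).
    intros k. apply der_csin.
Qed.

Lemma dphi_exder n T i x : ex_derive (dphi n T i) x.
Proof.
  unfold dphi, Ap, Sp. eexists.
  apply der_plus.
  - apply der_plus; apply (der_csin _ _ x).
  - apply (der_sum (fun k x => yc T i k * (INR k * w) * cos (INR k * w * x)) (fun k x => - (yc T i k * (INR k * w) * (INR k * w)) * sin (INR k * w * x))).
    intros k. apply der_ccos.
Qed.

Lemma phi_cont n T i x : continuous (phi n T i) x.
Proof. apply cont_of_der. eexists. apply phi_der. Qed.
Lemma dphi_cont n T i x : continuous (dphi n T i) x.
Proof. apply cont_of_der. apply dphi_exder. Qed.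

Lemma kd_neq a b : a <> b -> kd a b = 0.
Proof. intros; unfold kd; destruct (Nat.eq_dec a b); [lia|auto]. Qed.

Lemma I_AE n i j : (1 <= j)%nat ->
  is_RInt (fun x => Ap n i x * Ep n j x) (-1) 1 0.
Proof.
  intros Hj. unfold Ap, Ep.
  apply (iR_ext (fun x => (- (INR i * w)) * (sin (INR i * w * x) * cos (INR j * w * x))
     - (- (INR i * w)) * (sin (INR i * w * x) * cos (INR (S n) * w * x))
     + (INR (S n) * w) * (sin (INR (S n) * w * x) * cos (INR j * w * x))
     - (INR (S n) * w) * (sin (INR (S n) * w * x) * cos (INR (S n) * w * x)))).
  intros; ring.
  apply (iR_val _ _ _ ((- (INR i * w)) * 0 - (- (INR i * w)) * 0 + (INR (S n) * w) * 0 - (INR (S n) * w) * 0)); [|ring].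
  apply iR_minus; [apply iR_plus; [apply iR_minus; apply iR_scal, O1 | apply iR_scal, O1] | apply iR_scal, O1].
Qed.

Lemma I_AO n T i j : (1 <= i <= n)%nat ->
  is_RInt (fun x => Ap n i x * Op n T j x) (-1) 1 (- (INR i * w) * yc T j i).
Proof.
  intros Hi.
  apply (iR_ext (fun x => sum_f_R0 (fun k => yc T j k * sin (INR k * w * x) * Ap n i x) n)).
  { intros x. unfold Op. rewrite scal_sum. reflexivity. }
  apply (iR_val _ _ _ (sum_f_R0 (fun k => (yc T j k * - (INR i * w)) * kd k i) n)).
  2:{ rewrite sum_delta by lia. ring. }
  apply (iR_sum (fun k x => yc T j k * sin (INR k * w * x) * Ap n i x)).
  intros k Hk. unfold Ap.
  apply (iR_ext (fun x => (yc T j k * - (INR i * w)) * (sin (INR k * w * x) * sin (INR i * w * x))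
     + (yc T j k * (INR (S n) * w)) * (sin (INR k * w * x) * sin (INR (S n) * w * x)))).
  intros; ring.
  apply (iR_val _ _ _ ((yc T j k * - (INR i * w)) * kd k i + (yc T j k * (INR (S n) * w)) * kd k (S n))).
  2:{ rewrite (kd_neq k (S n)) by lia. ring. }
  apply iR_plus; apply iR_scal; apply O3; lia.
Qed.

Lemma I_SE n T i j : (1 <= j <= n)%nat ->
  is_RInt (fun x => Sp n T i x * Ep n j x) (-1) 1 (yc T i j * (INR j * w)).
Proof.
  intros Hj.
  apply (iR_ext (fun x => sum_f_R0 (fun k => yc T i k * (INR k * w) * cos (INR k * w * x) * Ep n j x) n)).
  { intros x. unfold Sp. rewrite (Rmult_comm (sum_f_R0 _ n)), scal_sum. apply sum_eq. intros; ring. }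
  apply (iR_val _ _ _ (sum_f_R0 (fun k => (yc T i k * (INR k * w)) * kd k j) n)).
  2:{ rewrite sum_delta by lia. ring. }
  apply (iR_sum (fun k x => yc T i k * (INR k * w) * cos (INR k * w * x) * Ep n j x)).
  intros k Hk. unfold Ep.
  apply (iR_ext (fun x => (yc T i k * (INR k * w)) * (cos (INR k * w * x) * cos (INR j * w * x))
     - (yc T i k * (INR k * w)) * (cos (INR k * w * x) * cos (INR (S n) * w * x)))).
  intros; ring.
  apply (iR_val _ _ _ ((yc T i k * (INR k * w)) * kd k j - (yc T i k * (INR k * w)) * kd k (S n))).
  2:{ rewrite (kd_neq k (S n)) by lia. ring. }
  apply iR_minus; apply iR_scal; apply O2; lia.
Qed.

Lemma I_SO n T i j :
  is_RInt (fun x => Sp n T i x * Op n T j x) (-1) 1 0.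
Proof.
  apply (iR_ext (fun x => sum_f_R0 (fun l => yc T i l * (INR l * w) * cos (INR l * w * x) * Op n T j x) n)).
  { intros x. unfold Sp. rewrite (Rmult_comm (sum_f_R0 _ n)), scal_sum. apply sum_eq. intros; ring. }
  apply (iR_val _ _ _ (sum_f_R0 (fun l => 0) n)).
  2:{ apply sum_zero; auto. }
  apply (iR_sum (fun l x => yc T i l * (INR l * w) * cos (INR l * w * x) * Op n T j x)).
  intros l Hl.
  apply (iR_ext (fun x => sum_f_R0 (fun k => (yc T i l * (INR l * w) * yc T j k) * (sin (INR k * w * x) * cos (INR l * w * x))) n)).
  { intros x. unfold Op. rewrite scal_sum. apply sum_eq. intros; ring. }
  apply (iR_val _ _ _ (sum_f_R0 (fun k => (yc T i l * (INR l * w) * yc T j k) * 0) n)).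
  2:{ apply sum_zero; intros; ring. }
  apply (iR_sum (fun k x => (yc T i l * (INR l * w) * yc T j k) * (sin (INR k * w * x) * cos (INR l * w * x)))).
  intros k Hk. apply iR_scal. apply O1.
Qed.

Lemma I_B n T i j : (1 <= i <= n)%nat -> (1 <= j <= n)%nat ->
  is_RInt (fun x => dphi n T i x * phi n T j x) (-1) 1
    (yc T i j * (INR j * w) - INR i * w * yc T j i).
Proof.
  intros Hi Hj.
  apply (iR_ext (fun x => (Ap n i x * Ep n j x + Ap n i x * Op n T j x) + (Sp n T i x * Ep n j x + Sp n T i x * Op n T j x))).
  { intros; unfold dphi, phi; ring. }
  apply (iR_val _ _ _ ((0 + - (INR i * w) * yc T j i) + (yc T i j * (INR j * w) + 0))); [|ring].
  apply iR_plus; apply iR_plus.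
  - apply I_AE; lia.
  - apply I_AO; lia.
  - apply I_SE; lia.
  - apply I_SO.
Qed.

Lemma I_phi n T j : (1 <= j)%nat -> is_RInt (phi n T j) (-1) 1 0.
Proof.
  intros Hj. unfold phi, Ep, Op.
  apply (iR_val _ _ _ ((0 - 0) + sum_f_R0 (fun k => yc T j k * 0) n)).
  2:{ rewrite sum_zero; [ring| intros; ring]. }
  apply (iR_plus (fun x => cos (INR j * w * x) - cos (INR (S n) * w * x))).
  - apply iR_minus; apply L0; lia.
  - apply (iR_sum (fun k x => yc T j k * sin (INR k * w * x))). intros; apply iR_scal, Lsin.
Qed.

Lemma cos_int a s : s = 1 \/ s = -1 -> cos (INR a * w * s) = 1.
Proof.
  intros [->| ->].
  - replace (INR a * w * 1) with (0 + 2 * INR a * PI) by (unfold w; ring). rewrite cos_period; apply cos_0.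
  - replace (INR a * w * -1) with (- (0 + 2 * INR a * PI)) by (unfold w; ring). rewrite cos_neg, cos_period; apply cos_0.
Qed.
Lemma sin_int a s : s = 1 \/ s = -1 -> sin (INR a * w * s) = 0.
Proof.
  intros [->| ->].
  - replace (INR a * w * 1) with (0 + 2 * INR a * PI) by (unfold w; ring). rewrite sin_period; apply sin_0.
  - replace (INR a * w * -1) with (- (0 + 2 * INR a * PI)) by (unfold w; ring). rewrite sin_neg, sin_period, sin_0; ring.
Qed.

Lemma phi_pm n T i s : s = 1 \/ s = -1 -> phi n T i s = 0.
Proof.
  intros Hs. unfold phi, Ep, Op. rewrite !cos_int by auto.
  rewrite sum_zero; [ring|]. intros; rewrite sin_int by auto; ring.
Qed.

Lemma I_xdphi n T i : (1 <= i)%nat -> is_RInt (fun x => x * dphi n T i x) (-1) 1 0.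
Proof.
  intros Hi.
  assert (H : is_RInt (fun x => phi n T i x + x * dphi n T i x) (-1) 1 0).
  { apply (ftc (fun x => x * phi n T i x)).
    - intros x. apply (der_eq _ _ (1 * phi n T i x + x * dphi n T i x)); [|ring].
      apply der_mult. apply der_id. apply phi_der.
    - intros x. destruct (dphi_exder n T i x) as [d Hd]. apply cont_of_der.
      exists (dphi n T i x + (1 * dphi n T i x + x * d)).
      apply der_plus. apply phi_der.
      apply der_mult. apply der_id. exact Hd.
    - rewrite !phi_pm by auto. ring. }
  apply (iR_ext (fun x => (phi n T i x + x * dphi n T i x) - phi n T i x)). intros; ring.
  apply (iR_val _ _ _ (0 - 0)); [|ring].
  apply iR_minus; auto. apply I_phi; auto.
Qed.
Definition Kc n := 2 * (INR (S n) * w) + INR (S n).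
Definition ep n := / (2 * Kc n).
Definition F n T i x := x + ep n * phi n T i x.
Definition dF n T i x := 1 + ep n * dphi n T i x.

Lemma INRS_ge1 n : 1 <= INR (S n).
Proof. apply (le_INR 1); lia. Qed.
Lemma Kc_ge1 n : 1 <= Kc n.
Proof. unfold Kc. pose proof (INRS_ge1 n). pose proof w_pos. nra. Qed.
Lemma ep_pos n : 0 < ep n.
Proof. unfold ep. pose proof (Kc_ge1 n). apply Rinv_0_lt_compat; lra. Qed.
Lemma ep_le n : ep n <= 1.
Proof. unfold ep. pose proof (Kc_ge1 n). rewrite <- Rinv_1. apply Rinv_le_contravar; lra. Qed.
Lemma ep_Kc n : ep n * Kc n = /2.
Proof. unfold ep. pose proof (Kc_ge1 n). field. lra. Qed.

Lemma sg_abs T i k : Rabs (sg T i k) = 1.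
Proof. unfold sg; destruct excluded_middle_informative; unfold Rabs; destruct Rcase_abs; lra. Qed.

Lemma abs_sin_le c x : Rabs (c * sin x) <= Rabs c.
Proof. rewrite Rabs_mult. pose proof (SIN_bound x). pose proof (Rabs_pos c).
  assert (Rabs (sin x) <= 1) by (apply Rabs_le; lra). nra. Qed.
Lemma abs_cos_le c x : Rabs (c * cos x) <= Rabs c.
Proof. rewrite Rabs_mult. pose proof (COS_bound x). pose proof (Rabs_pos c).
  assert (Rabs (cos x) <= 1) by (apply Rabs_le; lra). nra. Qed.

Lemma dphi_bound n T i x : (i <= n)%nat -> Rabs (dphi n T i x) <= Kc n.
Proof.
  intros Hi. unfold dphi, Ap, Sp, Kc.
  assert (HA : INR i * w <= INR (S n) * w).
  { apply Rmult_le_compat_r. pose proof w_pos; lra. apply le_INR; lia. }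
  assert (HI : 0 <= INR i * w) by (pose proof w_pos; pose proof (pos_INR i); nra).
  eapply Rle_trans; [apply Rabs_triang|].
  apply Rplus_le_compat.
  - eapply Rle_trans; [apply Rabs_triang|].
    pose proof (abs_sin_le (- (INR i * w)) (INR i * w * x)).
    pose proof (abs_sin_le (INR (S n) * w) (INR (S n) * w * x)).
    rewrite Rabs_Ropp, (Rabs_right (INR i * w)) in H by lra. rewrite (Rabs_right (INR (S n) * w)) in H0 by lra. lra.
  - rewrite <- (Rmult_1_r (INR (S n))). apply sum_bound.
    intros k. eapply Rle_trans; [apply abs_cos_le|].
    destruct k as [|k].
    + simpl. rewrite Rmult_0_l, Rmult_0_r, Rabs_R0; lra.
    + unfold yc. replace (sg T i (S k) / (2 * (INR (S k) * w)) * (INR (S k) * w)) with (sg T i (S k) / 2).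
      * unfold Rdiv; rewrite Rabs_mult, sg_abs, Rabs_right; lra.
      * pose proof w_pos; pose proof (INRS_ge1 k). field; split; lra.
Qed.

Lemma phi_bound n T i x : Rabs (phi n T i x) <= 2 + INR (S n).
Proof.
  unfold phi, Ep, Op.
  eapply Rle_trans; [apply Rabs_triang|]. apply Rplus_le_compat.
  - eapply Rle_trans; [apply Rabs_triang|]. rewrite Rabs_Ropp.
    pose proof (COS_bound (INR i * w * x)). pose proof (COS_bound (INR (S n) * w * x)).
    assert (Rabs (cos (INR i * w * x)) <= 1) by (apply Rabs_le; lra).
    assert (Rabs (cos (INR (S n) * w * x)) <= 1) by (apply Rabs_le; lra). lra.
  - rewrite <- (Rmult_1_r (INR (S n))). apply sum_bound.
    intros k. destruct k as [|k].
    + simpl. rewrite !Rmult_0_l, sin_0, Rmult_0_r, Rabs_R0; lra.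
    + eapply Rle_trans; [apply abs_sin_le|]. unfold yc, Rdiv.
      pose proof w_pos; pose proof (INRS_ge1 k).
      rewrite Rabs_mult, sg_abs, Rabs_right.
      * rewrite Rmult_1_l. assert (Hb : 1 <= 2 * (INR (S k) * w)) by (unfold w in *; pose proof PI2_1; nra).
        rewrite <- Rinv_1. apply Rinv_le_contravar; lra.
      * left; apply Rinv_0_lt_compat; nra.
Qed.

Lemma F_der n T i x : is_derive (F n T i) x (dF n T i x).
Proof.
  unfold F, dF. apply der_plus. apply der_id.
  apply (der_eq _ _ (0 * phi n T i x + ep n * dphi n T i x)); [|ring].
  apply der_mult. apply (der_eq _ _ _ 0 (is_derive_const (K := R_AbsRing) (ep n) x)). reflexivity.
  apply phi_der.
Qed.

Lemma dF_pos n T i x : (i <= n)%nat -> 0 < dF n T i x.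
Proof.
  intros Hi. unfold dF. pose proof (dphi_bound n T i x Hi). pose proof (ep_pos n). pose proof (ep_Kc n).
  apply Rabs_le_between in H. destruct H. nra.
Qed.

Lemma F_incr n T i x y : (i <= n)%nat -> x < y -> F n T i x < F n T i y.
Proof.
  intros Hi Hxy. apply (incr_function (F n T i) m_infty p_infty (dF n T i)); simpl; auto.
  intros; apply F_der. intros; apply dF_pos; auto.
Qed.

Lemma F_le n T i x y : (i <= n)%nat -> x <= y -> F n T i x <= F n T i y.
Proof. intros Hi [H|H]. left; apply F_incr; auto. subst; lra. Qed.

Lemma F_inj n T i x y : (i <= n)%nat -> F n T i x = F n T i y -> x = y.
Proof.
  intros Hi H. destruct (Rtotal_order x y) as [H1|[H1|H1]]; auto.
  - apply (F_incr n T i) in H1; auto; lra.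
  - apply (F_incr n T i) in H1; auto; lra.
Qed.

Lemma F_cont n T i x : continuous (F n T i) x.
Proof. apply cont_of_der. eexists. apply F_der. Qed.
Lemma F_contpt n T i x : continuity_pt (F n T i) x.
Proof. apply continuity_pt_filterlim. apply F_cont. Qed.

Lemma F_close n T i x : Rabs (F n T i x - x) <= 2 + INR (S n).
Proof.
  unfold F. replace (x + ep n * phi n T i x - x) with (ep n * phi n T i x) by ring.
  rewrite Rabs_mult. pose proof (phi_bound n T i x). pose proof (ep_pos n). pose proof (ep_le n).
  rewrite Rabs_right by lra. pose proof (Rabs_pos (phi n T i x)). nra.
Qed.

Lemma F_surj n T i t : exists x, F n T i x = t.
Proof.
  set (c := 3 + INR (S n)).
  assert (Hc : 0 < c) by (unfold c; pose proof (INRS_ge1 n); lra).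
  destruct (IVT (fun x => F n T i x - t) (t - c) (t + c)) as [z [_ Hz]].
  - intros x. apply continuity_pt_minus. apply F_contpt. apply continuity_pt_const. intros a b; auto.
  - lra.
  - pose proof (F_close n T i (t - c)). apply Rabs_le_between in H. unfold c in *. lra.
  - pose proof (F_close n T i (t + c)). apply Rabs_le_between in H. unfold c in *. lra.
  - exists z. lra.
Qed.

Definition G n T i t := epsilon (inhabits 0) (fun x => F n T i x = t).

Lemma FG n T i t : F n T i (G n T i t) = t.
Proof. unfold G. apply (epsilon_spec (inhabits 0) (fun x => F n T i x = t)). apply F_surj. Qed.

Lemma GF n T i x : (i <= n)%nat -> G n T i (F n T i x) = x.
Proof. intros Hi. apply (F_inj n T i); auto. apply FG. Qed.

Lemma G_contpt n T i t0 : (i <= n)%nat -> continuity_pt (G n T i) t0.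
Proof.
  intros Hi. unfold continuity_pt, continue_in, limit1_in, limit_in. intros e He.
  set (x0 := G n T i t0).
  assert (H1 : F n T i (x0 - e) < t0). { rewrite <- (FG n T i t0). apply F_incr; auto. unfold x0; lra. }
  assert (H2 : t0 < F n T i (x0 + e)). { rewrite <- (FG n T i t0) at 1. apply F_incr; auto. unfold x0; lra. }
  exists (Rmin (F n T i (x0 + e) - t0) (t0 - F n T i (x0 - e))). split.
  - apply Rmin_pos; lra.
  - intros t [_ Ht]. simpl in *. unfold R_dist in *.
    assert (Hm1 := Rmin_l (F n T i (x0 + e) - t0) (t0 - F n T i (x0 - e))).
    assert (Hm2 := Rmin_r (F n T i (x0 + e) - t0) (t0 - F n T i (x0 - e))).
    apply Rabs_def2 in Ht. destruct Ht as [Ht1 Ht2].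
    apply Rabs_def1.
    + destruct (Rlt_or_le (G n T i t) (x0 + e)) as [H3|H3]; [fold x0; lra|].
      apply (F_le n T i) in H3; auto. rewrite FG in H3. lra.
    + destruct (Rlt_or_le (x0 - e) (G n T i t)) as [H3|H3]; [fold x0; lra|].
      apply (F_le n T i) in H3; auto. rewrite FG in H3. lra.
Qed.

Lemma G_cont n T i t : (i <= n)%nat -> continuous (G n T i) t.
Proof. intros; apply continuity_pt_filterlim. apply G_contpt; auto. Qed.
Lemma F_p1 n T i : F n T i 1 = 1.
Proof. unfold F. rewrite phi_pm by auto. ring. Qed.
Lemma F_m1 n T i : F n T i (-1) = -1.
Proof. unfold F. rewrite phi_pm by auto. ring. Qed.

Lemma G_range n T i t : (i <= n)%nat -> -1 <= t <= 1 -> -1 <= G n T i t <= 1.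
Proof.
  intros Hi Ht. split.
  - destruct (Rlt_or_le (G n T i t) (-1)) as [H|H]; auto.
    apply (F_incr n T i) in H; auto. rewrite FG, F_m1 in H. lra.
  - destruct (Rlt_or_le 1 (G n T i t)) as [H|H]; auto.
    apply (F_incr n T i) in H; auto. rewrite FG, F_p1 in H. lra.
Qed.

Lemma ginv_G n T i t : (i <= n)%nat -> -1 <= t <= 1 -> ginv (F n T i) t = G n T i t.
Proof.
  intros Hi Ht. unfold ginv.
  destruct (epsilon_spec (inhabits 0) (fun x => -1 <= x <= 1 /\ F n T i x = t)) as [_ H].
  - exists (G n T i t). split. apply G_range; auto. apply FG.
  - rewrite <- (GF n T i (epsilon _ _)) by auto. rewrite H. reflexivity.
Qed.

Lemma F_cont_on_I n T i : cont_on_I (F n T i).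
Proof.
  intros x Hx e He. pose proof (F_contpt n T i x) as H.
  unfold continuity_pt, continue_in, limit1_in, limit_in in H.
  destruct (H e He) as [d [Hd Hd']]. exists d. split; auto.
  intros y Hy Hyx. destruct (Req_dec y x) as [->|Hne].
  - unfold Rminus; rewrite Rplus_opp_r, Rabs_R0; auto.
  - apply (Hd' y). split. split. constructor. auto. exact Hyx.
Qed.

Lemma I_x : is_RInt (fun x => x) (-1) 1 0.
Proof.
  apply (ftc (fun x => x * x / 2)).
  - intros x. auto_derive; auto. field.
  - intros x. apply cont_of_der. exists 1. apply der_id.
  - field.
Qed.

Lemma I_F n T i : (1 <= i)%nat -> is_RInt (F n T i) (-1) 1 0.
Proof.
  intros Hi. unfold F.
  apply (iR_val _ _ _ (0 + ep n * 0)); [|ring].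
  apply iR_plus. apply I_x. apply iR_scal. apply I_phi; auto.
Qed.

Lemma dF_cont n T i x : continuous (dF n T i) x.
Proof.
  destruct (dphi_exder n T i x) as [d Hd]. apply cont_of_der.
  exists (0 + (0 * dphi n T i x + ep n * d)). unfold dF.
  apply der_plus. apply (der_eq _ _ _ 0 (is_derive_const (K := R_AbsRing) 1 x)); reflexivity.
  apply der_mult. apply (der_eq _ _ _ 0 (is_derive_const (K := R_AbsRing) (ep n) x)); reflexivity.
  exact Hd.
Qed.

Definition Bv (n : nat) (T : nat -> nat -> Prop) (i j : nat) : R := yc T i j * (INR j * w) - INR i * w * yc T j i.

Lemma I_main n T i j : (1 <= i <= n)%nat -> (1 <= j <= n)%nat ->
  is_RInt (fun y => dF n T i y * F n T j y) (-1) 1 (ep n * ep n * Bv n T i j).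
Proof.
  intros Hi Hj. unfold Bv.
  apply (iR_ext (fun y => (y + ep n * phi n T j y) + (ep n * (y * dphi n T i y) + (ep n * ep n) * (dphi n T i y * phi n T j y)))).
  { intros; unfold dF, F; ring. }
  apply (iR_val _ _ _ ((0 + ep n * 0) + (ep n * 0 + (ep n * ep n) * (yc T i j * (INR j * w) - INR i * w * yc T j i)))); [|ring].
  apply iR_plus; apply iR_plus.
  - apply I_x.
  - apply iR_scal, I_phi; lia.
  - apply iR_scal, I_xdphi; lia.
  - apply iR_scal, I_B; lia.
Qed.

Lemma key n T i j : (1 <= i <= n)%nat -> (1 <= j <= n)%nat ->
  RInt (fun t => F n T j (ginv (F n T i) t)) (-1) 1 = ep n * ep n * Bv n T i j.
Proof.
  intros Hi Hj.
  rewrite (RInt_ext _ (fun t => F n T j (G n T i t))).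
  2:{ intros x Hx. rewrite Rmin_left, Rmax_right in Hx by lra. rewrite ginv_G; auto. lia. lra. }
  replace (RInt (fun t => F n T j (G n T i t)) (-1) 1)
    with (RInt (fun t => F n T j (G n T i t)) (F n T i (-1)) (F n T i 1))
    by (rewrite F_m1, F_p1; reflexivity).
  rewrite <- (RInt_comp (V := R_CompleteNormedModule) (fun t => F n T j (G n T i t)) (F n T i) (dF n T i)).
  - rewrite (RInt_ext _ (fun y => dF n T i y * F n T j y)).
    + apply is_RInt_unique. apply I_main; auto.
    + intros x _. rewrite GF by lia. reflexivity.
  - intros x _. apply (continuous_comp (G n T i) (F n T j)).
    apply G_cont; lia. apply F_cont.
  - intros x _. split. apply F_der. apply dF_cont.
Qed.

Lemma Bv_val n T i j : (1 <= i)%nat -> (1 <= j)%nat -> Bv n T i j = (sg T i j - sg T j i) / 2.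
Proof.
  intros Hi Hj. unfold Bv, yc.
  assert (0 < INR i) by (apply (lt_INR 0); lia).
  assert (0 < INR j) by (apply (lt_INR 0); lia).
  pose proof w_pos. field. split; lra.
Qed.

Lemma sg_T T i j : T i j -> sg T i j = 1.
Proof. intros H; unfold sg; destruct excluded_middle_informative; tauto. Qed.
Lemma sg_nT T i j : ~ T i j -> sg T i j = -1.
Proof. intros H; unfold sg; destruct excluded_middle_informative; tauto. Qed.

Lemma val_sign n T i j : is_tournament n T -> in_range n i -> in_range n j -> i <> j ->
  (T i j /\ Bv n T i j = 1) \/ (~ T i j /\ Bv n T i j = -1).
Proof.
  intros [_ [_ Ht]] Hi Hj Hij. unfold in_range in *.
  destruct (Ht i j Hi Hj Hij) as [[H|H] H'].
  - left. split; auto. rewrite Bv_val by lia. rewrite sg_T by auto. rewrite sg_nT by tauto. field.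
  - right. assert (~ T i j) by tauto. split; auto. rewrite Bv_val by lia. rewrite sg_nT by auto. rewrite sg_T by auto. field.
Qed.

Theorem theorem2p1 (n : nat) (T : nat -> nat -> Prop) :
  is_tournament n T ->
  exists f : nat -> R -> R,
    (forall i, in_range n i -> inG0 (f i)) /\
    (forall i j, in_range n i -> in_range n j -> i <> j -> ~ G_eq (f i) (f j)) /\
    (forall i j, in_range n i -> in_range n j -> i <> j ->
       (RInt (fun t => f j (ginv (f i) t)) (-1) 1 > 0 <-> T i j)).
Proof.
  intros Htour. exists (F n T). split; [|split].
  - intros i Hi. unfold in_range in Hi. split.
    + split; [|split; [|split]].
      * intros x y _ Hxy _. apply F_incr; auto; lia.
      * apply F_cont_on_I.
      * apply F_m1.
      * apply F_p1.
    + apply is_RInt_unique. apply I_F; lia.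
  - intros i j Hi Hj Hij Heq.
    pose proof (key n T i j Hi Hj) as Hk.
    rewrite (RInt_ext _ (fun t => t)) in Hk.
    2:{ intros x Hx. rewrite Rmin_left, Rmax_right in Hx by lra.
        unfold in_range in Hi.
        rewrite ginv_G by (auto; lia || lra). rewrite <- Heq. apply FG.
        apply G_range; [lia|lra]. }
    rewrite (is_RInt_unique _ _ _ _ I_x) in Hk.
    pose proof (ep_pos n).
    destruct (val_sign n T i j Htour Hi Hj Hij) as [[_ Hb]|[_ Hb]]; rewrite Hb in Hk; nra.
  - intros i j Hi Hj Hij. rewrite key by auto. pose proof (ep_pos n).
    destruct (val_sign n T i j Htour Hi Hj Hij) as [[HT Hb]|[HT Hb]]; rewrite Hb; split; intro; try tauto; try nra.
Qed.
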